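(* Let $C$ be a locally optimal coloring of $E(K_n)$. Then for every color $i$ and every edge $uv$ of color $i$, we have $a_{u,i}+a_{v,i}\le 3$. Consequently every color class of $C$ is a vertex-disjoint union of single edges and paths with two edges.
   Context: A coloring is any map $C:E(K_n)\to\{1,\dots,n-1\}$, not necessarily proper ($n\ge 2$). For a vertex $u$ and color $\mu$, $a_{u,\mu}$ is the number of $\mu$-colored edges incident with $u$, and $\Psi(C)=\sum_{u,\mu}\binom{a_{u,\mu}}{2}$. A coloring $C$ is locally optimal if every coloring $C'$ that differs from $C$ on exactly one edge satisfies $\Psi(C')\ge \Psi(C)$. *)

(* Defs.v *)
From mathcomp Require Import all_boot.
Set Implicit Arguments. Unset Strict Implicit. Unset Printing Implicit Defensive.

Definition edge (n : nat) := {e : {set 'I_n} | #|e| == 2}.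

(* Colors {1,...,n-1} are represented by 'I_(n.-1) (i.e. {0,...,n-2}). *)
Definition coloring (n : nat) := {ffun edge n -> 'I_(n.-1)}.

Definition adeg n (C : coloring n) (u : 'I_n) (mu : 'I_(n.-1)) : nat :=
  #|[set e : edge n | (u \in val e) && (C e == mu)]|.

Definition Psi n (C : coloring n) : nat :=
  \sum_(u : 'I_n) \sum_(mu : 'I_(n.-1)) 'C(adeg C u mu, 2).

Definition differ_one n (C C' : coloring n) : Prop :=
  #|[set e : edge n | C e != C' e]| = 1.

Definition locally_optimal n (C : coloring n) : Prop :=
  forall C' : coloring n, differ_one C C' -> Psi C <= Psi C'.

Definition color_class n (C : coloring n) (i : 'I_(n.-1)) : {set edge n} :=
  [set e | C e == i].

Definition edge_or_P3 n (B : {set edge n}) : Prop :=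
  #|B| = 1 \/
  exists e1 e2 : edge n, [/\ B = [set e1; e2], e1 != e2 &
                           #|val e1 :&: val e2| = 1].

Definition disjoint_union_edges_P3 n (F : {set edge n}) : Prop :=
  exists P : {set {set edge n}},
    [/\ partition P F,
        (forall B, B \in P -> edge_or_P3 B) &
        (forall B1 B2, B1 \in P -> B2 \in P -> B1 != B2 ->
           forall e1 e2, e1 \in B1 -> e2 \in B2 -> [disjoint val e1 & val e2])].

(* Main.v *)
Require Import Defs.
From mathcomp Require Import all_boot.
From mathcomp Require Import zify.
Set Implicit Arguments. Unset Strict Implicit. Unset Printing Implicit Defensive.

Section S.
Variables (n : nat) (C : coloring n).

Lemma card_edge (f : edge n) : #|val f| = 2.
Proof. by apply/eqP; exact: (valP f). Qed.

Lemma edge_at (f : edge n) w : w \in val f -> exists x, x != w /\ val f = [set w; x].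
Proof.
move=> wf.
have h1 : #|val f :\ w| = 1 by have := cardsD1 w (val f); rewrite wf card_edge; lia.
case/cards1P: (introT eqP h1) => x hx.
have xf : x \in val f :\ w by rewrite hx set11.
move: xf; rewrite in_setD1 => /andP[xw xf].
exists x; split => //.
by rewrite -(setD1K wf) hx.
Qed.

Definition other (w : 'I_n) (f : edge n) : 'I_n := odflt w [pick x in val f :\ w].

Lemma otherP (f : edge n) w : w \in val f -> other w f != w /\ val f = [set w; other w f].
Proof.
move=> wf; have [x [xw fx]] := edge_at wf.
rewrite /other; case: pickP => [y|].
  rewrite fx in_setD1 !inE => /andP[yw /orP[/eqP|/eqP ->]]; first by move=> e; rewrite e eqxx in yw.
  by [].
by move=> /(_ x); rewrite fx in_setD1 !inE xw eqxx orbT.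
Qed.

Lemma deg_le w : \sum_(mu : 'I_(n.-1)) adeg C w mu <= n.-1.
Proof.
have -> : \sum_(mu : 'I_(n.-1)) adeg C w mu = #|[set f : edge n | w \in val f]|.
  rewrite -sum1_card (partition_big C predT) //=.
  apply: eq_bigr => mu _; rewrite /adeg -sum1_card; apply: eq_bigl => f.
  by rewrite !inE.
rewrite -(card_in_imset (f := other w)).
  have -> : n.-1 = #|[set~ w]| by rewrite cardsC1 card_ord.
  apply: subset_leq_card.
  apply/subsetP => x /imsetP[f]; rewrite inE => wf ->.
  by rewrite !inE; have [] := otherP wf.
move=> f g; rewrite !inE => wf wg e.
have [_ hf] := otherP wf; have [_ hg] := otherP wg.
by apply: val_inj; rewrite hf hg e.
Qed.
End S.
Section R.
Variables (n : nat) (C : coloring n) (e : edge n) (u v : 'I_n) (i j : 'I_(n.-1)).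
Hypotheses (he : val e = [set u; v]) (uv : u != v) (Ce : C e = i) (ji : j != i).

Definition C' : coloring n := [ffun f => if f == e then j else C f].
Definition g (D : coloring n) w := \sum_(mu : 'I_(n.-1)) 'C(adeg D w mu, 2).

Lemma adeg_out w mu : w \notin val e -> adeg C' w mu = adeg C w mu.
Proof.
move=> we; rewrite /adeg; apply: eq_card => f; rewrite !inE ffunE.
by have [->|_] := eqVneq f e; rewrite /= //; rewrite (negbTE we).
Qed.

Lemma adeg_i w : w \in val e -> adeg C' w i = (adeg C w i).-1.
Proof.
move=> we; rewrite /adeg [in RHS](cardsD1 e) !inE we Ce eqxx /=.
apply: eq_card => f; rewrite !inE ffunE; have [->|_] := eqVneq f e; rewrite //=.
by rewrite (negbTE ji) andbF.
Qed.

Lemma adeg_j w : w \in val e -> adeg C' w j = (adeg C w j).+1.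
Proof.
move=> we; rewrite /adeg.
transitivity #|e |: [set f : edge n | (w \in val f) && (C f == j)]|.
  apply: eq_card => f; rewrite !inE ffunE; have [->|_] := eqVneq f e; rewrite //=.
  by rewrite we eqxx.
by rewrite cardsU1 inE Ce eq_sym (negbTE ji) andbF.
Qed.

Lemma adeg_oth w mu : mu != i -> mu != j -> adeg C' w mu = adeg C w mu.
Proof.
move=> mi mj; rewrite /adeg; apply: eq_card => f; rewrite !inE ffunE.
have [->|_] := eqVneq f e; rewrite /= //; by rewrite Ce (eq_sym i) (negbTE mi) (eq_sym j) (negbTE mj) !andbF.
Qed.

Lemma adeg_pos w : w \in val e -> 0 < adeg C w i.
Proof.
move=> we; rewrite /adeg card_gt0; apply/set0Pn; exists e; by rewrite inE we Ce eqxx.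
Qed.

Lemma g_in w : w \in val e -> g C w + adeg C w j = g C' w + (adeg C w i).-1.
Proof.
move=> we; rewrite /g [in LHS](bigD1 i) // [in RHS](bigD1 i) //=.
rewrite [in LHS](bigD1 j) /=; last by rewrite ji.
rewrite [in RHS](bigD1 j) /=; last by rewrite ji.
rewrite adeg_i // adeg_j //.
rewrite [in RHS](eq_bigr (fun mu => 'C(adeg C w mu, 2))); last first.
  by move=> mu /andP[mi mj]; rewrite adeg_oth.
have := adeg_pos we; case: (adeg C w i) => [|x] // _ /=.
rewrite binS bin1 binS bin1; lia.
Qed.

Lemma g_out w : w \notin val e -> g C' w = g C w.
Proof. by move=> we; apply: eq_bigr => mu _; rewrite adeg_out. Qed.

Lemma Psi_eq : Psi C + (adeg C u j + adeg C v j) = Psi C' + ((adeg C u i).-1 + (adeg C v i).-1).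
Proof.
have H : forall F : 'I_n -> nat, \sum_(w : 'I_n) (if w \in val e then F w else 0) = F u + F v.
  move=> F; rewrite -big_mkcond /= he big_setU1 /=; last by rewrite inE.
  by rewrite big_set1.
rewrite /Psi -(H (fun w => adeg C w j)) -(H (fun w => (adeg C w i).-1)) -!big_split /=.
apply: eq_bigr => w _; case: ifP => we; first exact: g_in.
by rewrite !addn0 -/(g C w) -/(g C' w) g_out ?we.
Qed.

Lemma differ : differ_one C C'.
Proof.
rewrite /differ_one (_ : [set f : edge n | C f != C' f] = [set e]) ?cards1 //.
apply/setP => f; rewrite !inE ffunE; have [->|_] := eqVneq f e; last by rewrite eqxx.
by rewrite Ce eq_sym ji.
Qed.
End R.

Lemma part1 n (C : coloring n) : locally_optimal C ->
  forall (i : 'I_(n.-1)) (u v : 'I_n) (e : edge n),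
      val e = [set u; v] -> u != v -> C e = i ->
      adeg C u i + adeg C v i <= 3.
Proof.
move=> LO i u v e he uv Ce; rewrite leqNgt; apply/negP => H4.
have key : forall j, j != i -> (adeg C u i).-1 + (adeg C v i).-1 <= adeg C u j + adeg C v j.
  move=> j ji; have E := Psi_eq he uv Ce ji.
  have L := LO _ (differ Ce ji); lia.
have du : \sum_(mu < n.-1) adeg C u mu <= n.-1 := deg_le C u.
have dv : \sum_(mu < n.-1) adeg C v mu <= n.-1 := deg_le C v.
have S : \sum_(mu < n.-1) (adeg C u mu + adeg C v mu) >= adeg C u i + adeg C v i + 2 * (n.-1).-1.
  rewrite (bigD1 i) //= leq_add2l.
  apply: (@leq_trans (\sum_(mu < n.-1 | mu != i) 2)).
    by rewrite sum_nat_const cardC1 card_ord mulnC.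
  apply: leq_sum => j ji; have := key j ji; lia.
rewrite big_split /= in S.
have n1 : 1 <= n.-1.
  by have := ltn_ord i; lia.
move: S du dv; move: (\sum_(mu < n.-1) adeg C u mu) (\sum_(mu < n.-1) adeg C v mu) => X Y.
lia.
Qed.

Section P2.
Variables (n : nat) (C : coloring n).
Hypothesis H1 : forall (i : 'I_(n.-1)) (u v : 'I_n) (e : edge n),
      val e = [set u; v] -> u != v -> C e = i ->
      adeg C u i + adeg C v i <= 3.

Definition meets (f g : edge n) := ~~ [disjoint val f & val g].

Lemma meetsP f g : meets f g -> exists w, (w \in val f) && (w \in val g).
Proof. by rewrite /meets -setI_eq0 => /set0Pn[w]; rewrite inE; exists w. Qed.

Lemma adeg_ge (S : {set edge n}) w i :
  (forall f, f \in S -> (w \in val f) && (C f == i)) -> #|S| <= adeg C w i.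
Proof.
move=> HS; apply: subset_leq_card; apply/subsetP => f fS; rewrite inE; exact: HS.
Qed.

Lemma no3 i f g h : C f = i -> C g = i -> C h = i -> f != g -> g != h -> f != h ->
  meets f g -> meets g h -> False.
Proof.
move=> Cf Cg Ch fg gh fh /meetsP[w /andP[wf wg]] /meetsP[x /andP[xg xh]].
have [yw hg] := otherP wg; set y := other w g in yw hg.
have wy : w != y by rewrite eq_sym.
have B := H1 hg wy Cg.
have ag : forall z, z \in val g -> 1 <= adeg C z i.
  move=> z zg; have := adeg_ge (S := [set g]) (w := z) (i := i).
  rewrite cards1; apply => k; rewrite inE => /eqP ->; by rewrite zg Cg eqxx.
have := xg; rewrite hg !inE => /orP[/eqP xw|/eqP xy].
  subst x.
  have : 3 <= adeg C w i.
    have := adeg_ge (S := f |: [set g; h]) (w := w) (i := i).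
    rewrite cardsU1 cards2 !inE negb_or fg fh gh /=; apply => k.
    by rewrite !inE => /orP[|/orP[]] /eqP ->; rewrite ?wf ?wg ?xh ?Cf ?Cg ?Ch eqxx.
  have := ag y; rewrite hg !inE eqxx orbT => /(_ isT); lia.
subst x.
have : 2 <= adeg C w i.
  have := adeg_ge (S := [set f; g]) (w := w) (i := i).
  rewrite cards2 fg; apply => k.
  by rewrite !inE => /orP[] /eqP ->; rewrite ?wf ?wg ?Cf ?Cg eqxx.
have : 2 <= adeg C y i.
  have := adeg_ge (S := [set g; h]) (w := y) (i := i).
  rewrite cards2 gh; apply => k.
  by rewrite !inE => /orP[] /eqP ->; rewrite ?xg ?xh ?Cg ?Ch eqxx.
lia.
Qed.
End P2.

Lemma part2 n (C : coloring n) :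
  (forall (i : 'I_(n.-1)) (u v : 'I_n) (e : edge n),
      val e = [set u; v] -> u != v -> C e = i ->
      adeg C u i + adeg C v i <= 3) ->
  forall i : 'I_(n.-1), disjoint_union_edges_P3 (color_class C i).
Proof.
move=> H1 i.
set F := color_class C i.
pose R := [rel f g : edge n | meets f g].
have refl : forall f, R f f.
  move=> f; rewrite /= /meets -setI_eq0 setIid; apply/set0Pn.
  have : 0 < #|val f| by rewrite card_edge.
  by rewrite card_gt0 => /set0Pn.
have sym : forall f g, R f g -> R g f by move=> f g; rewrite /= /meets disjoint_sym.
have inF : forall f, (f \in F) = (C f == i) by move=> f; rewrite inE.
have tr : forall a b c, a \in F -> b \in F -> c \in F -> R a b -> R b c -> R a c.
  move=> a b c; rewrite !inF => /eqP Ca /eqP Cb /eqP Cc ab bc.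
  have [-> //|nab] := eqVneq a b; have [<- //|nbc] := eqVneq b c.
  have [-> //|nac] := eqVneq a c.
  by case: (no3 H1 Ca Cb Cc nab nbc nac ab bc).
have eqR : {in F & &, equivalence_rel R}.
  move=> x y z xF yF zF; split; first exact: refl.
  move=> xy; apply/idP/idP => H.
    exact: tr (sym _ _ xy) H.
  exact: tr xy H.
set P := equivalence_partition R F.
have pP := equivalence_partitionP eqR.
have pbP := pblock_equivalence_partition eqR.
move: (pP); rewrite /partition => /and3P[/eqP covP trP nP0].
have inB : forall B f, B \in P -> f \in B -> f \in F.
  move=> B f BP fB; rewrite -covP; apply/bigcupP; by exists B.
exists P; split => //.
- move=> B BP.
  have : B != set0 by apply: contraNneq nP0 => <-.
  case/set0Pn => e eB.
  have eF := inB _ _ BP eB.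
  have Be : B = pblock P e by rewrite (def_pblock trP BP eB).
  have memB : forall f, f \in F -> (f \in B) = R e f by move=> f fF; rewrite Be pbP.
  case: (boolP [exists f in B, f != e]) => [/existsP[f /andP[fB fe]]| /existsPn Hn].
    right; exists e, f.
    have fF := inB _ _ BP fB.
    have ef : R e f by rewrite -memB.
    split.
    + apply/setP => k; rewrite !inE; apply/idP/idP.
        move=> kB; have kF := inB _ _ BP kB.
        have [ke|ke] := eqVneq k e; first by [].
        have [kf|kf] := eqVneq k f; first by rewrite orbT.
        exfalso.
        move: (fF) (eF) (kF); rewrite !inF => /eqP Cf /eqP Ce /eqP Ck.
        apply: (no3 H1 Cf Ce Ck fe _ _ (sym _ _ ef)).
        * by rewrite eq_sym.
        * by rewrite eq_sym.
        * by move: (memB k kF); rewrite kB /= => <-.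
      by case/orP => /eqP ->.
    + by rewrite eq_sym.
    + apply/eqP; rewrite eqn_leq; apply/andP; split; last first.
        rewrite card_gt0; move: ef; rewrite /= /meets -setI_eq0 //.
      rewrite leqNgt; apply/negP => H2.
      have E1 : val e :&: val f == val e by rewrite eqEcard subsetIl card_edge.
      have E2 : val e :&: val f == val f by rewrite eqEcard subsetIr card_edge.
      move: fe; rewrite -(inj_eq val_inj) => /eqP; apply; exact: (etrans (esym (eqP E2)) (eqP E1)).
  left.
  have -> : B = [set e].
    apply/setP => k; rewrite inE; apply/idP/eqP => [kB|->//].
    by apply/eqP; move: (Hn k); rewrite kB /= negbK.
  by rewrite cards1.
- move=> B1 B2 B1P B2P B12 e1 e2 e1B e2B.
  case: (boolP [disjoint val e1 & val e2]) => // Hm; exfalso.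
  move/negP: B12; apply; apply/eqP.
  have e1F := inB _ _ B1P e1B; have e2F := inB _ _ B2P e2B.
  have h1 := def_pblock trP B1P e1B.
  have h2 := def_pblock trP B2P e2B.
  have : e2 \in pblock P e1 by rewrite pbP.
  rewrite h1 => e2B1.
  by rewrite -(def_pblock trP B1P e2B1) h2.
Qed.

Theorem lemma1 (n : nat) (hn : 2 <= n) (C : coloring n) :
  locally_optimal C ->
  (forall (i : 'I_(n.-1)) (u v : 'I_n) (e : edge n),
      val e = [set u; v] -> u != v -> C e = i ->
      adeg C u i + adeg C v i <= 3) /\
  (forall i : 'I_(n.-1), disjoint_union_edges_P3 (color_class C i)).
Proof.
move=> LO; have H1 := part1 LO; split => //; exact: part2 H1.
Qed.
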